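(* Let $L$ be a finite-dimensional Lie algebra over a field $F$, let $M$ be a maximal subalgebra of $L$, and let $C$ and $D$ be ideal completions of $M$ in $L$. Then $C/k(C)\cong D/k(D)$.
   Context: For a nonzero subalgebra $B$ of $L$, the strict core $k(B)$ is the sum of all ideals of $L$ that are proper subalgebras of $B$ (it is $0$ if there are none). A subalgebra $C$ of $L$ is a completion of $M$ if $C\not\subseteq M$ but every proper subalgebra of $C$ that is an ideal of $L$ is contained in $M$. An ideal completion of $M$ is a completion of $M$ which is an ideal of $L$; for such $C$, $k(C)$ is an ideal of $L$ contained in $C$, so $C/k(C)$ is a Lie algebra. *)

(* Defs.v *)
From HB Require Import structures.
From mathcomp Require Import all_boot all_order all_algebra.
Set Implicit Arguments. Unset Strict Implicit. Unset Printing Implicit Defensive.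
Import GRing.Theory.
Local Open Scope ring_scope.


Section Lie.
Variables (F : fieldType) (L : vectType F) (br : L -> L -> L).

Definition is_lie_bracket : Prop :=
  [/\ (forall (a : F) (x y z : L), br (a *: x + y) z = a *: br x z + br y z),
      (forall (a : F) (x y z : L), br x (a *: y + z) = a *: br x y + br x z),
      (forall x : L, br x x = 0) &
      (forall x y z : L, br x (br y z) + br y (br z x) + br z (br x y) = 0)].

Definition is_subalgebra (U : {vspace L}) : Prop :=
  forall x y, x \in U -> y \in U -> br x y \in U.

Definition is_ideal (I : {vspace L}) : Prop :=
  forall x y, y \in I -> br x y \in I.

Definition is_maximal_subalgebra (M : {vspace L}) : Prop :=
  [/\ is_subalgebra M, M != fullv &
      forall U : {vspace L}, is_subalgebra U -> (M <= U)%VS ->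
        U = M \/ U = fullv].

(* membership in the strict core k(B): the sum of all ideals of L that are
   proper subalgebras of B (0 if there are none).  x lies in this sum iff
   x lies in a finite sum of such ideals. *)
Definition in_strict_core (B : {vspace L}) (x : L) : Prop :=
  exists s : seq {vspace L},
    (forall I, I \in s -> is_ideal I /\ (I <= B)%VS /\ I != B) /\
    x \in (\sum_(I <- s) I)%VS.

Definition is_completion (M C : {vspace L}) : Prop :=
  [/\ is_subalgebra C, ~~ (C <= M)%VS &
      forall I : {vspace L}, is_ideal I -> (I <= C)%VS -> I != C -> (I <= M)%VS].

Definition is_ideal_completion (M C : {vspace L}) : Prop :=
  is_completion M C /\ is_ideal C.

(* C/k(C) is isomorphic (as Lie algebras) to D/k(D): there is a linear map
   f mapping C into D which induces a bijective Lie homomorphism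
   C/k(C) -> D/k(D), i.e. a surjective Lie homomorphism C -> D/k(D)
   whose kernel is exactly k(C). *)
Definition quotients_isomorphic (C D : {vspace L}) : Prop :=
  exists f : 'End(L),
    [/\ (forall x, x \in C -> f x \in D),
        (forall d, d \in D -> exists2 c, c \in C & in_strict_core D (d - f c)),
        (forall x, x \in C -> (in_strict_core D (f x) <-> in_strict_core C x)) &
        (forall x y, x \in C -> y \in C ->
           in_strict_core D (f (br x y) - br (f x) (f y)))].

End Lie.

(* Main.v *)
Require Import Defs.
From HB Require Import structures.
From mathcomp Require Import all_boot all_order all_algebra.
Set Implicit Arguments. Unset Strict Implicit. Unset Printing Implicit Defensive.
Import GRing.Theory.
Local Open Scope ring_scope.

Lemma zz (V : zmodType) (a b p q d : V) : b - d = (a + b) - (a + p + q + d - q - p).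
Proof. rewrite (addrAC _ q d) addrK (addrAC a p d) addrK.
by rewrite opprD addrACA subrr add0r. Qed.

Section Aux.
Variables (F : fieldType) (L : vectType F) (br : L -> L -> L).
Hypothesis Hbr : is_lie_bracket br.

Lemma brDl x y z : br (x + y) z = br x z + br y z.
Proof. case: Hbr => H1 _ _ _. by rewrite -[x]scale1r H1 !scale1r. Qed.

Lemma brDr x y z : br x (y + z) = br x y + br x z.
Proof. case: Hbr => _ H1 _ _. by rewrite -[y]scale1r H1 !scale1r. Qed.

Lemma brC x y : br x y = - br y x.
Proof.
case: Hbr => _ _ alt _.
have := alt (x + y); rewrite brDl !brDr !alt add0r addr0 => /eqP.
by rewrite addr_eq0 => /eqP.
Qed.

Lemma ideal_l (I : {vspace L}) x y : is_ideal br I -> y \in I -> br y x \in I.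
Proof. by move=> HI Hy; rewrite brC rpredN; apply: HI. Qed.

Lemma core0 (B : {vspace L}) : in_strict_core br B 0.
Proof. by exists [::]; split => //; rewrite mem0v. Qed.

Lemma core_of (B I : {vspace L}) x : is_ideal br I -> (I <= B)%VS -> I != B ->
  x \in I -> in_strict_core br B x.
Proof.
move=> HI sIB nIB xI; exists [:: I]; split; last by rewrite big_seq1.
by move=> J; rewrite inE => /eqP ->.
Qed.

Lemma core_sub (M B : {vspace L}) x : is_completion br M B ->
  in_strict_core br B x -> x \in M.
Proof.
case=> _ _ HB [s [Hs xs]]; apply: (subvP _ _ xs).
elim: s Hs {xs} => [|I s IH] Hs; first by rewrite big_nil sub0v.
rewrite big_cons subv_add IH ?andbT; last by move=> J Js; apply: Hs; rewrite inE Js orbT.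
by have [HI [sIB nIB]] := Hs I (mem_head I s); rewrite HB.
Qed.

Lemma sum_full (M C : {vspace L}) : is_maximal_subalgebra br M ->
  is_ideal_completion br M C -> forall x, x \in (M + C)%VS.
Proof.
case=> sM _ maxM [[_ nCM _] iC] x.
have sub : is_subalgebra br (M + C).
  move=> u v /memv_addP [m1 m1M [c1 c1C ->]] /memv_addP [m2 m2M [c2 c2C ->]].
  rewrite !brDl !brDr; apply: rpredD; apply: rpredD.
  - by apply: (subvP (addvSl M C)); apply: sM.
  - by apply: (subvP (addvSr M C)); apply: iC.
  - by apply: (subvP (addvSr M C)); apply: ideal_l.
  - by apply: (subvP (addvSr M C)); apply: iC.
case: (maxM _ sub (addvSl M C)) => [eq|->]; last exact: memvf.
by move: nCM; rewrite -eq addvSr.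
Qed.

Lemma CD_M (M C D : {vspace L}) : is_maximal_subalgebra br M ->
  is_ideal_completion br M C -> is_ideal_completion br M D -> C != D ->
  forall x, x \in C -> x \in D -> x \in M.
Proof.
move=> _ [[sC nCM HC] iC] [[sD nDM HD] iD] nCD x xC xD.
have iCD : is_ideal br (C :&: D).
  by move=> u v /memv_capP [vC vD]; rewrite memv_cap iC // iD.
have nCD' : (C :&: D)%VS != C.
  apply/negP => /eqP eq.
  have sCD : (C <= D)%VS by rewrite -eq capvSr.
  by move: nCM; rewrite (HD C iC sCD nCD).
by apply: (subvP (HC _ iCD (capvSl C D) nCD')); rewrite memv_cap xC xD.
Qed.

Lemma core_char (M C D : {vspace L}) : is_maximal_subalgebra br M ->
  is_ideal_completion br M C -> is_ideal_completion br M D -> C != D ->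
  forall y, y \in M -> y \in D -> in_strict_core br D y.
Proof.
move=> HM HC HD nCD y yM yD.
have full := sum_full HM HC.
have [sM _ _] := HM.
have [[_ _ _] iC] := HC; have [[_ nDM _] iD] := HD.
have iMD : is_ideal br (M :&: D).
  move=> u v /memv_capP [vM vD].
  have /memv_addP [m mM [c cC ->]] := full u.
  rewrite brDl; apply: rpredD; first by rewrite memv_cap sM // iD.
  have h1 : br c v \in C by apply: ideal_l.
  have h2 : br c v \in D by apply: iD.
  by rewrite memv_cap h2 (CD_M HM HC HD nCD h1 h2).
apply: (core_of iMD (capvSr M D)); last by rewrite memv_cap yM yD.
apply/negP => /eqP eq; move: nDM; by rewrite -eq capvSl.
Qed.

End Aux.

Theorem theorem2p1 (F : fieldType) (L : vectType F) (br : L -> L -> L)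
  (M C D : {vspace L}) :
  is_lie_bracket br ->
  is_maximal_subalgebra br M ->
  is_ideal_completion br M C ->
  is_ideal_completion br M D ->
  quotients_isomorphic br C D.
Proof.
move=> Hbr HM HC HD.
case: (eqVneq C D) => [<-|nCD].
  exists \1%VF; split.
  - by move=> x xC; rewrite lfunE.
  - by move=> d dC; exists d => //; rewrite lfunE subrr; apply: core0.
  - by move=> x xC; rewrite lfunE.
  - by move=> x y _ _; rewrite !lfunE subrr; apply: core0.
have nDC : D != C by rewrite eq_sym.
have fullD := sum_full Hbr HM HD.
have fullC := sum_full Hbr HM HC.
have kD := core_char Hbr HM HC HD nCD.
have kC := core_char Hbr HM HD HC nDC.
have CDM := CD_M HM HC HD nCD.
have [[sC _ _] iC] := HC.
have [[_ _ _] iD] := HD.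
have [sM _ _] := HM.
pose f : 'End(L) := - addv_pi2 M D.
have fD x : f x \in D by rewrite opp_lfunE rpredN memv_pi2.
have fM x : x + f x \in M.
  by rewrite opp_lfunE -{1}(addv_pi1_pi2 (fullD x)) addrK memv_pi1.
exists f; split.
- by move=> x _; apply: fD.
- move=> d dD; have /memv_addP [m mM [c cC dE]] := fullC d.
  exists (- c); first by rewrite rpredN.
  apply: kD; last by rewrite rpredB ?fD.
  have -> : d - f (- c) = m + (c + f c) by rewrite linearN /= opprK dE addrA.
  by rewrite rpredD ?fM.
- move=> x xC; split.
  + move=> /(core_sub HD.1) fxM.
    by apply: kC => //; rewrite -[x](addrK (f x)) rpredB ?fM.
  + move=> /(core_sub HC.1) xM.
    by apply: kD => //; rewrite -[f x](addKr x) rpredD ?rpredN ?fM.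
- move=> x y xC yC.
  apply: kD; last by rewrite rpredB ?fD // iD ?fD.
  have e : br (x + f x) (y + f y)
      = br x y + br x (f y) + br (f x) y + br (f x) (f y).
    by rewrite (brDl Hbr) !(brDr Hbr) !addrA.
  have c1C : br x (f y) \in C by apply: ideal_l.
  have c1D : br x (f y) \in D by apply: iD.
  have c2C : br (f x) y \in C by apply: iC.
  have c2D : br (f x) y \in D by apply: (ideal_l Hbr).
  rewrite (zz (br x y) _ (br x (f y)) (br (f x) y)) -e.
  apply: rpredB; first exact: fM.
  apply: rpredB; last exact: CDM.
  apply: rpredB; last exact: CDM.
  exact: (sM _ _ (fM x) (fM y)).
Qed.
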